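(* Assume $a_1+a_2=1$. Then $$\Pi^2_0(z)=-\frac{n}{2}\,F(z)\,\log\!\Big(q\,\frac{1-a_0z}{z}\Big)=-\frac n2\Big(F(z)\log(1-a_0z)+\tilde G(z)\Big),$$ where $z=z_1$ and $q=z\exp(\tilde G(z)/F(z))$ is $q_1=e^{\Pi^1/\Pi^0}$ restricted to $z_2=0$.
   Context: Let $\theta_i=z_i\,\partial/\partial z_i$. Fix an integer $n\ge1$ and constants $a_0\neq0,a_1,a_2$. Consider the system $L_1=-n\theta_1\theta_2+\theta_1^2-a_0z_1(\theta_1+a_1)(\theta_1+a_2)$, $L_2=\theta_2^{n}-(-1)^n z_2\,(n\theta_2-\theta_1)(n\theta_2-\theta_1+1)\cdots(n\theta_2-\theta_1+n-1)$. Let $\Pi^0$ be the solution holomorphic at $0$ with $\Pi^0(0)=1$ and, for $a=1,2$, $\Pi^a=\Pi^0\log z_a+\sum_{i\ge0}\Pi^a_i(z_1)z_2^i$ solutions, normalized (by adding multiples of $\Pi^0$) so that $\Pi^a_0(0)=0$. Let $F(z)={}_2F_1(a_1,a_2;1;a_0z)$ and $\tilde G(z)=\sum_{k\ge1}\frac{(a_1)_k(a_2)_k}{(k!)^2}\Big[\sum_{j=1}^2\sum_{l=0}^{k-1}\big(\tfrac1{a_j+l}-\tfrac1{1+l}\big)\Big](a_0z)^k$. *)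

(* Defs.v *)
From HB Require Import structures.
From mathcomp Require Import all_boot all_order all_algebra.
Set Implicit Arguments. Unset Strict Implicit. Unset Printing Implicit Defensive.
Import Order.TTheory GRing.Theory Num.Theory.
Local Open Scope ring_scope.

Section GKZ.
Variable R : fieldType.

(* formal power series in z1, z2 : coefficient of z1^k z2^m *)
Definition ser := nat -> nat -> R.
Definition ser0 : ser := fun _ _ => 0.

(* log-series  lc + l1 * log z1 + l2 * log z2  with lc, l1, l2 formal power series *)
Record lser := mkLS { lc : ser; l1 : ser; l2 : ser }.

Definition sadd (s t : ser) : ser := fun k m => s k m + t k m.
Definition sscale (c : R) (s : ser) : ser := fun k m => c * s k m.
Definition th1s (s : ser) : ser := fun k m => k%:R * s k m.
Definition th2s (s : ser) : ser := fun k m => m%:R * s k m.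
Definition z1s (s : ser) : ser := fun k m => if k is k'.+1 then s k' m else 0.
Definition z2s (s : ser) : ser := fun k m => if m is m'.+1 then s k m' else 0.

Definition lsadd (f g : lser) : lser :=
  mkLS (sadd (lc f) (lc g)) (sadd (l1 f) (l1 g)) (sadd (l2 f) (l2 g)).
Definition lsscale (c : R) (f : lser) : lser :=
  mkLS (sscale c (lc f)) (sscale c (l1 f)) (sscale c (l2 f)).

(* theta_i = z_i d/dz_i, using theta_i (log z_i) = 1, theta_i (log z_j) = 0 (j <> i) *)
Definition theta1 (f : lser) : lser :=
  mkLS (sadd (th1s (lc f)) (l1 f)) (th1s (l1 f)) (th1s (l2 f)).
Definition theta2 (f : lser) : lser :=
  mkLS (sadd (th2s (lc f)) (l2 f)) (th2s (l1 f)) (th2s (l2 f)).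
Definition z1mul (f : lser) : lser := mkLS (z1s (lc f)) (z1s (l1 f)) (z1s (l2 f)).
Definition z2mul (f : lser) : lser := mkLS (z2s (lc f)) (z2s (l1 f)) (z2s (l2 f)).

Definition op := lser -> lser.
Definition oadd (A B : op) : op := fun f => lsadd (A f) (B f).
Definition ocomp (A B : op) : op := fun f => A (B f).
Definition oscale (c : R) (A : op) : op := fun f => lsscale c (A f).
Definition oconst (c : R) : op := fun f => lsscale c f.
Definition oid : op := fun f => f.

Definition L1 (n : nat) (a0 a1 a2 : R) : op :=
  oadd (oadd (oscale (- n%:R) (ocomp theta1 theta2)) (ocomp theta1 theta1))
       (oscale (- a0) (ocomp z1mul (ocomp (oadd theta1 (oconst a1))
                                          (oadd theta1 (oconst a2))))).

Definition L2fac (n j : nat) : op :=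
  oadd (oadd (oscale n%:R theta2) (oscale (-1) theta1)) (oconst j%:R).
Definition L2 (n : nat) : op :=
  oadd (iter n (ocomp theta2) oid)
       (oscale (- (-1) ^+ n)
          (ocomp z2mul (foldr (fun j acc => ocomp (L2fac n j) acc) oid (iota 0 n)))).

Definition lsnull (f : lser) : Prop :=
  forall k m, lc f k m = 0 /\ l1 f k m = 0 /\ l2 f k m = 0.

Definition is_sol (n : nat) (a0 a1 a2 : R) (f : lser) : Prop :=
  lsnull (L1 n a0 a1 a2 f) /\ lsnull (L2 n f).

Definition poch (a : R) (k : nat) : R := \prod_(l < k) (a + l%:R).

(* coefficient of z^k in F(z) = 2F1(a1,a2;1;a0 z) *)
Definition Fcoef (a0 a1 a2 : R) (k : nat) : R :=
  poch a1 k * poch a2 k / (k`!%:R ^+ 2) * a0 ^+ k.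

(* coefficient of z^k in log(1 - a0 z) = - sum_{k>=1} (a0 z)^k / k *)
Definition logcoef (a0 : R) (k : nat) : R :=
  if k is 0 then 0 else - (a0 ^+ k / k%:R).

(* coefficient of z^k in F(z) log(1 - a0 z) *)
Definition Flogcoef (a0 a1 a2 : R) (k : nat) : R :=
  \sum_(i < k.+1) Fcoef a0 a1 a2 i * logcoef a0 (k - i).

(* coefficient of z^k in tilde G(z) (zero for k = 0) *)
Definition Gtcoef (a0 a1 a2 : R) (k : nat) : R :=
  poch a1 k * poch a2 k / (k`!%:R ^+ 2)
  * (\sum_(a <- [:: a1; a2]) \sum_(l < k) ((a + l%:R)^-1 - (1 + l%:R)^-1))
  * a0 ^+ k.

End GKZ.

(* Main.v *)
Require Import Defs.
From HB Require Import structures.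
From mathcomp Require Import all_boot all_order all_algebra.
From mathcomp Require Import ring.
Import Order.TTheory GRing.Theory Num.Theory.
Local Open Scope ring_scope.

Section Aux.
Variable R : numFieldType.

Lemma nS_neq0 (k : nat) : k.+1%:R != 0 :> R.
Proof. by rewrite pnatr_eq0. Qed.

Lemma rec_Pi0 n (a0 a1 a2 : R) (Pi0 : ser R) k :
  is_sol n a0 a1 a2 (mkLS Pi0 (ser0 R) (ser0 R)) ->
  k.+1%:R ^+ 2 * Pi0 k.+1 0%N = a0 * (k%:R + a1) * (k%:R + a2) * Pi0 k 0%N.
Proof.
move=> [H _]; have := (H k.+1 0%N).1.
rewrite /L1 /oadd /oscale /ocomp /oconst /lsscale /lsadd /= /sadd /sscale
  /th1s /th2s /z1s /ser0 /= => E.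
apply/eqP; rewrite -subr_eq0; apply/eqP; rewrite -E; ring.
Qed.

Lemma rec_P2 n (a0 a1 a2 : R) (Pi0 P2 : ser R) k :
  is_sol n a0 a1 a2 (mkLS P2 (ser0 R) Pi0) ->
  k.+1%:R ^+ 2 * P2 k.+1 0%N = a0 * (k%:R + a1) * (k%:R + a2) * P2 k 0%N
     + n%:R * k.+1%:R * Pi0 k.+1 0%N.
Proof.
move=> [H _]; have := (H k.+1 0%N).1.
rewrite /L1 /oadd /oscale /ocomp /oconst /lsscale /lsadd /= /sadd /sscale
  /th1s /th2s /z1s /ser0 /= => E.
apply/eqP; rewrite -subr_eq0; apply/eqP; rewrite -E; ring.
Qed.

Lemma Fcoef_rec (a0 a1 a2 : R) k :
  k.+1%:R ^+ 2 * Fcoef a0 a1 a2 k.+1 = a0 * (k%:R + a1) * (k%:R + a2) * Fcoef a0 a1 a2 k.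
Proof.
rewrite /Fcoef /poch !big_ord_recr /= factS natrM [a0 ^+ k.+1]exprS.
have h1 := nS_neq0 k.
have h2 : k`!%:R != 0 :> R by rewrite pnatr_eq0 -lt0n fact_gt0.
field. by rewrite h2 nat1r pnatr_eq0.
Qed.

Definition phi (a0 : R) (F : nat -> R) k :=
  \sum_(i < k) F i * (a0 ^+ (k - i) / (k - i)%:R).

Lemma Flog_phi (a0 a1 a2 : R) k : Flogcoef a0 a1 a2 k = - phi a0 (Fcoef a0 a1 a2) k.
Proof.
rewrite /Flogcoef /phi big_ord_recr /= subnn /= mulr0 addr0 -sumrN.
apply: eq_bigr => i _.
have hi : (k - i)%N = (k - i).-1.+1 by rewrite prednK // subn_gt0.
by rewrite hi /= mulrN.
Qed.

Lemma term1 (a0 f : R) (k i : nat) : (i <= k)%N ->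
  k.+1%:R ^+ 2 * (f * (a0 ^+ (k.+1 - i) / (k.+1 - i)%:R)) =
  f * a0 ^+ (k.+1 - i) * (k.+1 + i)%:R
  + i%:R ^+ 2 * f * (a0 ^+ (k.+1 - i) / (k.+1 - i)%:R).
Proof.
move=> hi.
set x := a0 ^+ _.
have hik' : (k.+1 - i)%:R != 0 :> R by rewrite pnatr_eq0 -lt0n subn_gt0.
move: hik'; rewrite natrB ?(leq_trans hi) // => hik'.
rewrite natrD. field. by rewrite nat1r.
Qed.

Lemma term2 (a0 a1 a2 f : R) (k i : nat) : (i < k)%N -> a2 = 1 - a1 ->
  a0 * (i%:R + a1) * (i%:R + a2) * f * (a0 ^+ (k - i) / (k - i)%:R) =
  a0 * (k%:R + a1) * (k%:R + a2) * (f * (a0 ^+ (k - i) / (k - i)%:R)) -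
  f * a0 ^+ (k.+1 - i) * (k.+1 + i)%:R.
Proof.
move=> hi ha2.
rewrite (subSn (ltnW hi)) exprS.
set x := a0 ^+ _.
have hikp : (k - i)%:R != 0 :> R by rewrite pnatr_eq0 -lt0n subn_gt0.
move: hikp; rewrite (natrB _ (ltnW hi)) => hikp.
rewrite natrD ha2. field. by [].
Qed.

Lemma phi_rec (a0 a1 a2 : R) (F : nat -> R) k :
  (forall j, j.+1%:R ^+ 2 * F j.+1 = a0 * (j%:R + a1) * (j%:R + a2) * F j) ->
  a1 + a2 = 1 ->
  k.+1%:R ^+ 2 * phi a0 F k.+1 - a0 * (k%:R + a1) * (k%:R + a2) * phi a0 F k
  = a0 * (2 * k.+1 - 1)%:R * F k.
Proof.
move=> Frec ha.
have ha2 : a2 = 1 - a1 by rewrite -ha; ring.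
rewrite /phi mulr_sumr.
rewrite (eq_bigr _ (fun (i : 'I_k.+1) _ => term1 a0 (F i) _ _ (ltnSE (ltn_ord i)))).
rewrite big_split /= (big_ord_recr k) (big_ord_recl k) /=.
rewrite subSnn expr1 mulr0n expr0n /= ?mulr0n !mul0r add0r mulr_sumr.
have -> : \sum_(i < k) (bump 0 i)%:R ^+ 2 * F (bump 0 i) *
     (a0 ^+ (k.+1 - bump 0 i) / (k.+1 - bump 0 i)%:R) =
  \sum_(i < k) a0 * (i%:R + a1) * (i%:R + a2) * F i * (a0 ^+ (k - i) / (k - i)%:R).
  apply: eq_bigr => i _; rewrite (_ : bump 0 i = i.+1) // subSS Frec //.
rewrite (eq_bigr _ (fun (i : 'I_k) _ => term2 a0 a1 a2 (F i) _ _ (ltn_ord i) ha2)).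
rewrite sumrB.
set S1 := \sum_(i < k) _ * a0 ^+ _ * _.
set S2 := \sum_(i < k) _ * (F i * _).
rewrite (_ : (2 * k.+1 - 1)%N = (k.+1 + k)%N); last by rewrite mul2n -addnn addnS subn1.
ring.
Qed.

End Aux.

Lemma Gt_F (R : numFieldType) (a0 a1 a2 : R) k :
  Gtcoef a0 a1 a2 k = Fcoef a0 a1 a2 k *
    (\sum_(a <- [:: a1; a2]) \sum_(l < k) ((a + l%:R)^-1 - (1 + l%:R)^-1)).
Proof. rewrite /Gtcoef /Fcoef; ring. Qed.

Lemma H_rec (R : numFieldType) (a1 a2 : R) k :
  (\sum_(a <- [:: a1; a2]) \sum_(l < k.+1) ((a + l%:R)^-1 - (1 + l%:R)^-1)) =
  (\sum_(a <- [:: a1; a2]) \sum_(l < k) ((a + l%:R)^-1 - (1 + l%:R)^-1))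
  + ((a1 + k%:R)^-1 - (1 + k%:R)^-1) + ((a2 + k%:R)^-1 - (1 + k%:R)^-1).
Proof. rewrite !big_cons !big_nil !big_ord_recr /=; ring. Qed.

Theorem mainTheorem7 (R : numClosedFieldType) (n : nat) (a0 a1 a2 : R)
    (Pi0 P2 : ser R) :
  (1 <= n)%N -> a0 != 0 ->
  (forall l : nat, a1 + l%:R != 0) -> (forall l : nat, a2 + l%:R != 0) ->
  (* Pi^0 : the solution holomorphic at 0 with Pi^0(0) = 1 *)
  is_sol n a0 a1 a2 (mkLS Pi0 (ser0 R) (ser0 R)) -> Pi0 0%N 0%N = 1 ->
  (* Pi^2 = Pi^0 log z2 + sum_i Pi^2_i(z1) z2^i, normalized by Pi^2_0(0) = 0 *)
  is_sol n a0 a1 a2 (mkLS P2 (ser0 R) Pi0) -> P2 0%N 0%N = 0 ->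
  a1 + a2 = 1 ->
  forall k : nat,
    P2 k 0%N = - (n%:R / 2) * (Flogcoef a0 a1 a2 k + Gtcoef a0 a1 a2 k).
Proof.
move=> _ _ h1 h2 s0 p00 s2 p20 ha.
set F := Fcoef a0 a1 a2.
have Frec := @Fcoef_rec _ a0 a1 a2.
have PiF : forall k, Pi0 k 0%N = F k.
  elim=> [|k IH]; first by rewrite p00 /F /Fcoef /poch !big_ord0 expr0 fact0; field.
  have e := @rec_Pi0 _ _ _ _ _ _ k s0. rewrite IH /F -Frec in e.
  by apply: (mulfI (expf_neq0 2 (nS_neq0 R k))).
set H := fun k => \sum_(a <- [:: a1; a2]) \sum_(l < k) ((a + l%:R)^-1 - (1 + l%:R)^-1).
set T := fun k => - (n%:R / 2) * (Flogcoef a0 a1 a2 k + Gtcoef a0 a1 a2 k).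
have T0 : T 0%N = 0.
  rewrite /T /Flogcoef /Gtcoef big_ord_recr big_ord0 /= !big_cons !big_ord0 big_nil; ring.
have Trec : forall k, k.+1%:R ^+ 2 * T k.+1 =
    a0 * (k%:R + a1) * (k%:R + a2) * T k + n%:R * k.+1%:R * F k.+1.
  move=> k.
  have ep := @phi_rec _ _ _ _ _ k Frec ha.
  rewrite /T !Flog_phi !Gt_F H_rec -/F.
  set h := \sum_(a <- _) _.
  set p1 := phi _ a0 F k.+1 in ep *. set p0 := phi _ a0 F k in ep *.
  have ef : k.+1%:R ^+ 2 * F k.+1 = a0 * (k%:R + a1) * (k%:R + a2) * F k := Frec k.
  set f1 := F k.+1 in ep ef *. set f0 := F k in ep ef *.
  rewrite (_ : (2 * k.+1 - 1)%N = (k.+1 + k)%N) in ep; last by rewrite mul2n -addnn addnS subn1.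
  have ha2 : a2 = 1 - a1 by rewrite -ha; ring.
  have n1 := h1 k. have n2 := h2 k. have nk := nS_neq0 R k.
  have ef' : f1 = a0 * (k%:R + a1) * (k%:R + a2) * f0 / k.+1%:R ^+ 2.
    rewrite -ef; field; by rewrite nat1r.
  have ep' : p1 = (a0 * (k.+1 + k)%:R * f0 + a0 * (k%:R + a1) * (k%:R + a2) * p0) / k.+1%:R ^+ 2.
    rewrite -ep; field; by rewrite nat1r.
  rewrite ep' ef'. move: n2. rewrite ha2 => n2. rewrite natrD.
  field. by rewrite nat1r nk n1 n2.
elim=> [|k IH]; first by rewrite p20 -[RHS]/(T 0%N) T0.
have e := @rec_P2 _ _ _ _ _ _ _ k s2. rewrite PiF IH -Trec in e.
by apply: (mulfI (expf_neq0 2 (nS_neq0 R k))).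
Qed.
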